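(* In the setting of the context, for every $\mu\in U$ such that $(\Phi,\mu)$ has no singular connection, every periodic point of $f_\mu$ is regular.
   Context: Let $N\ge2$, $\lambda\in(0,1)$, and $\varphi_1,\dots,\varphi_N\colon[0,1]\to[0,1]$ bi-Lipschitz with Lipschitz constant $\le\lambda$, $\Phi=\{\varphi_i\}$, and assume $\varphi_i([0,1])\subset(0,1)$ for every $i$. Let $U=\{\mu=(\mu_1,\dots,\mu_{N-1}):0<\mu_1<\cdots<\mu_{N-1}<1\}$, $\mu_0=0$, $\mu_N=1$. For $\mu\in U$, $f_\mu\colon[0,1]\to[0,1]$ satisfies $f_\mu=\varphi_i$ on $A_{i,\mu}=(\mu_{i-1},\mu_i)$, $i=1,\dots,N$, and at each point of the singular set $S_\mu=\{0,\mu_1,\dots,\mu_{N-1},1\}$, $f_\mu$ is either left continuous or right continuous. A point is regular if its forward $f_\mu$-orbit never meets $S_\mu$. For $\alpha=(i_0,\dots,i_{n-1})$, $\varphi^\alpha=\varphi_{i_{n-1}}\circ\cdots\circ\varphi_{i_0}$; $(\Phi,\mu)$ has a singular connection if $\varphi^\alpha(\mu_i)=\mu_j$ for some $n\ge1$, $\alpha\in\{1,\dots,N\}^n$, $i,j\in\{1,\dots,N-1\}$. *)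

(* Defs.v *)
From Stdlib Require Import Reals Lra Lia List.
Open Scope R_scope.

Definition in01 (x : R) : Prop := 0 <= x <= 1.

Definition bilip_le (lam : R) (phi : R -> R) : Prop :=
  (forall x, in01 x -> in01 (phi x)) /\
  (forall x y, in01 x -> in01 y -> Rabs (phi x - phi y) <= lam * Rabs (x - y)) /\
  (exists c, 0 < c /\
     forall x y, in01 x -> in01 y -> c * Rabs (x - y) <= Rabs (phi x - phi y)).

Definition left_cont_at (f : R -> R) (s : R) : Prop :=
  forall eps, 0 < eps -> exists delta, 0 < delta /\
    forall y, in01 y -> s - delta < y <= s -> Rabs (f y - f s) < eps.

Definition right_cont_at (f : R -> R) (s : R) : Prop :=
  forall eps, 0 < eps -> exists delta, 0 < delta /\
    forall y, in01 y -> s <= y < s + delta -> Rabs (f y - f s) < eps.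

(* mu : nat -> R encodes (mu_0, mu_1, ..., mu_N) with mu_0 = 0, mu_N = 1,
   and (mu_1, ..., mu_{N-1}) in U; values of mu beyond N are irrelevant. *)
Definition in_U (N : nat) (mu : nat -> R) : Prop :=
  mu 0%nat = 0 /\ mu N = 1 /\ (forall i, (i < N)%nat -> mu i < mu (S i)).

Definition singular_set (N : nat) (mu : nat -> R) (x : R) : Prop :=
  exists i, (i <= N)%nat /\ x = mu i.

Definition is_f_mu (N : nat) (phi : nat -> R -> R) (mu : nat -> R)
    (f : R -> R) : Prop :=
  (forall x, in01 x -> in01 (f x)) /\
  (forall i x, (1 <= i <= N)%nat -> mu (pred i) < x < mu i -> f x = phi i x) /\
  (forall i, (1 <= i <= N - 1)%nat -> left_cont_at f (mu i) \/ right_cont_at f (mu i)) /\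
  (* endpoints: the only non-vacuous one-sided continuity *)
  right_cont_at f 0 /\ left_cont_at f 1.

(* phi^alpha = phi_{i_{n-1}} o ... o phi_{i_0} for alpha = [i_0; ...; i_{n-1}] *)
Definition phi_word (phi : nat -> R -> R) (alpha : list nat) (x : R) : R :=
  fold_left (fun y k => phi k y) alpha x.

Definition singular_connection (N : nat) (phi : nat -> R -> R) (mu : nat -> R) : Prop :=
  exists (alpha : list nat) (i j : nat),
    (1 <= length alpha)%nat /\
    (forall k, In k alpha -> (1 <= k <= N)%nat) /\
    (1 <= i <= N - 1)%nat /\ (1 <= j <= N - 1)%nat /\
    phi_word phi alpha (mu i) = mu j.

Definition regular_point (N : nat) (mu : nat -> R) (f : R -> R) (x : R) : Prop :=
  forall k : nat, ~ singular_set N mu (Nat.iter k f x).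

Definition periodic_point (f : R -> R) (x : R) : Prop :=
  in01 x /\ exists n : nat, (1 <= n)%nat /\ Nat.iter n f x = x.

(* Main.v *)
Require Import Defs.
From Stdlib Require Import Reals Lra Lia List.
Open Scope R_scope.

Lemma iter_add_l (f : R -> R) (n k : nat) (x : R) :
  Nat.iter (n + k) f x = Nat.iter n f (Nat.iter k f x).
Proof. induction n; simpl; [reflexivity | now rewrite IHn]. Qed.

Lemma mu_mono N mu : in_U N mu -> forall i j, (i < j <= N)%nat -> mu i < mu j.
Proof.
  intros [H0 [H1 H2]] i j Hij. induction j. lia.
  destruct (Nat.eq_dec i j). subst; apply H2; lia.
  assert (mu i < mu j) by (apply IHj; lia). specialize (H2 j ltac:(lia)). lra.
Qed.

Lemma mu_in01 N mu : in_U N mu -> forall i, (i <= N)%nat -> in01 (mu i).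
Proof.
  intros HU i Hi. pose proof HU as [H0 [H1 _]]. unfold in01.
  destruct (Nat.eq_dec i 0). subst; lra.
  destruct (Nat.eq_dec i N). subst; lra.
  pose proof (mu_mono N mu HU 0 i ltac:(lia)).
  pose proof (mu_mono N mu HU i N ltac:(lia)). lra.
Qed.

Lemma cover N mu : in_U N mu -> forall k, (k <= N)%nat -> forall y, mu 0%nat <= y <= mu k ->
  (exists i, (i <= k)%nat /\ y = mu i) \/
  (exists i, (1 <= i <= k)%nat /\ mu (pred i) < y < mu i).
Proof.
  intros HU k. induction k; intros Hk y Hy.
  - left. exists 0%nat. split. lia. lra.
  - destruct (Rle_lt_dec y (mu k)).
    + destruct (IHk ltac:(lia) y ltac:(lra)) as [[i [? ?]]|[i [? ?]]].
      left; exists i; split; [lia|auto].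
      right; exists i; split; [lia|auto].
    + destruct (Req_dec y (mu (S k))).
      left; exists (S k); split; [lia|auto].
      right; exists (S k); split. lia. simpl. lra.
Qed.

Lemma left_lim N lam phi mu f :
  0 < lam < 1 ->
  (forall i, (1 <= i <= N)%nat -> bilip_le lam (phi i)) ->
  in_U N mu -> is_f_mu N phi mu f ->
  forall i, (1 <= i <= N)%nat -> left_cont_at f (mu i) -> f (mu i) = phi i (mu i).
Proof.
  intros Hl Hb HU Hf i Hi Hc.
  destruct (Req_dec (f (mu i)) (phi i (mu i))) as [|Hne]; auto. exfalso.
  set (eps := Rabs (f (mu i) - phi i (mu i)) / 2).
  assert (Heps : 0 < eps) by (unfold eps; pose proof (Rabs_pos_lt _ (Rminus_eq_contra _ _ Hne)); lra).
  destruct (Hc eps Heps) as [d [Hd Hc']].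
  pose proof (mu_mono N mu HU (pred i) i ltac:(lia)) as Hm.
  set (t := Rmin d (Rmin (mu i - mu (pred i)) eps) / 2).
  assert (Ht : 0 < t /\ t < d /\ t < mu i - mu (pred i) /\ t < eps).
  { unfold t. pose proof (Rmin_l d (Rmin (mu i - mu (pred i)) eps)).
    pose proof (Rmin_r d (Rmin (mu i - mu (pred i)) eps)).
    pose proof (Rmin_l (mu i - mu (pred i)) eps).
    pose proof (Rmin_r (mu i - mu (pred i)) eps).
    assert (0 < Rmin d (Rmin (mu i - mu (pred i)) eps)).
    { apply Rmin_pos. lra. apply Rmin_pos; lra. }
    lra. }
  set (y := mu i - t).
  pose proof (mu_in01 N mu HU i ltac:(lia)) as Hmi.
  pose proof (mu_in01 N mu HU (pred i) ltac:(lia)) as Hmp.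
  unfold in01 in *.
  assert (Hy : in01 y) by (unfold in01, y; lra).
  specialize (Hc' y Hy ltac:(unfold y; lra)).
  destruct Hf as [_ [Hfi _]].
  rewrite (Hfi i y Hi ltac:(unfold y; lra)) in Hc'.
  destruct (Hb i Hi) as [_ [Hlip _]].
  specialize (Hlip y (mu i) Hy Hmi).
  replace (y - mu i) with (- t) in Hlip by (unfold y; ring).
  rewrite Rabs_Ropp, (Rabs_right t) in Hlip by (destruct Ht as [? _]; lra).
  assert (lam * t < eps) by (assert (lam * t < 1 * t) by (apply Rmult_lt_compat_r; lra); lra).
  assert (Rabs (f (mu i) - phi i (mu i)) <= Rabs (phi i y - f (mu i)) + Rabs (phi i y - phi i (mu i))).
  { replace (f (mu i) - phi i (mu i)) with (- (phi i y - f (mu i)) + (phi i y - phi i (mu i))) by ring.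
    eapply Rle_trans. apply Rabs_triang. rewrite Rabs_Ropp. lra. }
  unfold eps in *. lra.
Qed.

Lemma right_lim N lam phi mu f :
  0 < lam < 1 ->
  (forall i, (1 <= i <= N)%nat -> bilip_le lam (phi i)) ->
  in_U N mu -> is_f_mu N phi mu f ->
  forall i, (i < N)%nat -> right_cont_at f (mu i) -> f (mu i) = phi (S i) (mu i).
Proof.
  intros Hl Hb HU Hf i Hi Hc.
  destruct (Req_dec (f (mu i)) (phi (S i) (mu i))) as [|Hne]; auto. exfalso.
  set (eps := Rabs (f (mu i) - phi (S i) (mu i)) / 2).
  assert (Heps : 0 < eps) by (unfold eps; pose proof (Rabs_pos_lt _ (Rminus_eq_contra _ _ Hne)); lra).
  destruct (Hc eps Heps) as [d [Hd Hc']].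
  pose proof (mu_mono N mu HU i (S i) ltac:(lia)) as Hm.
  set (t := Rmin d (Rmin (mu (S i) - mu i) eps) / 2).
  assert (Ht : 0 < t /\ t < d /\ t < mu (S i) - mu i /\ t < eps).
  { unfold t. pose proof (Rmin_l d (Rmin (mu (S i) - mu i) eps)).
    pose proof (Rmin_r d (Rmin (mu (S i) - mu i) eps)).
    pose proof (Rmin_l (mu (S i) - mu i) eps).
    pose proof (Rmin_r (mu (S i) - mu i) eps).
    assert (0 < Rmin d (Rmin (mu (S i) - mu i) eps)).
    { apply Rmin_pos. lra. apply Rmin_pos; lra. }
    lra. }
  set (y := mu i + t).
  pose proof (mu_in01 N mu HU i ltac:(lia)) as Hmi.
  pose proof (mu_in01 N mu HU (S i) ltac:(lia)) as Hmp.
  unfold in01 in *.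
  assert (Hy : in01 y) by (unfold in01, y; lra).
  specialize (Hc' y Hy ltac:(unfold y; lra)).
  destruct Hf as [_ [Hfi _]].
  rewrite (Hfi (S i) y ltac:(lia) ltac:(simpl; unfold y; lra)) in Hc'.
  destruct (Hb (S i) ltac:(lia)) as [_ [Hlip _]].
  specialize (Hlip y (mu i) Hy Hmi).
  replace (y - mu i) with t in Hlip by (unfold y; ring).
  rewrite (Rabs_right t) in Hlip by (destruct Ht as [? _]; lra).
  assert (lam * t < eps) by (assert (lam * t < 1 * t) by (apply Rmult_lt_compat_r; lra); lra).
  assert (Rabs (f (mu i) - phi (S i) (mu i)) <= Rabs (phi (S i) y - f (mu i)) + Rabs (phi (S i) y - phi (S i) (mu i))).
  { replace (f (mu i) - phi (S i) (mu i)) with (- (phi (S i) y - f (mu i)) + (phi (S i) y - phi (S i) (mu i))) by ring.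
    eapply Rle_trans. apply Rabs_triang. rewrite Rabs_Ropp. lra. }
  unfold eps in *. lra.
Qed.

Lemma f_is_phi N lam phi mu f :
  (2 <= N)%nat -> 0 < lam < 1 ->
  (forall i, (1 <= i <= N)%nat -> bilip_le lam (phi i)) ->
  in_U N mu -> is_f_mu N phi mu f ->
  forall y, in01 y -> exists j, (1 <= j <= N)%nat /\ f y = phi j y.
Proof.
  intros HN Hl Hb HU Hf y Hy.
  pose proof HU as [H0 [H1 _]].
  destruct (cover N mu HU N (le_n _) y ltac:(unfold in01 in Hy; lra))
    as [[i [Hi ->]]|[i [Hi Hyi]]].
  - destruct (Nat.eq_dec i 0).
    + subst. exists 1%nat. split. lia.
      pose proof Hf as (_ & _ & _ & Hr & _).
      apply (right_lim N lam phi mu f Hl Hb HU Hf 0 ltac:(lia)). now rewrite H0.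
    + destruct (Nat.eq_dec i N).
      * subst. exists N. split. lia.
        pose proof Hf as (_ & _ & _ & _ & Hr).
        apply (left_lim N lam phi mu f Hl Hb HU Hf N ltac:(lia)). now rewrite H1.
      * pose proof Hf as (_ & _ & Hc & _).
        destruct (Hc i ltac:(lia)) as [Hc'|Hc'].
        -- exists i. split. lia. apply (left_lim N lam phi mu f Hl Hb HU Hf i ltac:(lia) Hc').
        -- exists (S i). split. lia. apply (right_lim N lam phi mu f Hl Hb HU Hf i ltac:(lia) Hc').
  - exists i. split. lia. destruct Hf as [_ [Hfi _]]. now apply Hfi.
Qed.

Lemma iter_in01 f : (forall x, in01 x -> in01 (f x)) -> forall m x, in01 x -> in01 (Nat.iter m f x).
Proof. intros Hf m; induction m; intros; simpl; auto. Qed.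

Lemma iter_word N lam phi mu f :
  (2 <= N)%nat -> 0 < lam < 1 ->
  (forall i, (1 <= i <= N)%nat -> bilip_le lam (phi i)) ->
  in_U N mu -> is_f_mu N phi mu f ->
  forall m y, in01 y -> exists alpha, length alpha = m /\
    (forall k, In k alpha -> (1 <= k <= N)%nat) /\ Nat.iter m f y = phi_word phi alpha y.
Proof.
  intros HN Hl Hb HU Hf m. induction m; intros y Hy.
  - exists nil. split; [reflexivity|split; [intros ? []|reflexivity]].
  - destruct (IHm y Hy) as [alpha [Hlen [Hin Heq]]].
    assert (Hz : in01 (Nat.iter m f y)) by (apply iter_in01; auto; apply Hf).
    destruct (f_is_phi N lam phi mu f HN Hl Hb HU Hf _ Hz) as [j [Hj Hfj]].
    exists (alpha ++ j :: nil). split. rewrite length_app; simpl; lia. split.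
    + intros k Hk. apply in_app_or in Hk. destruct Hk as [Hk|[Hk|[]]]; auto. subst; auto.
    + simpl. rewrite Hfj, Heq. unfold phi_word. now rewrite fold_left_app.
Qed.

Theorem lemma4p4 (N : nat) (lam : R) (phi : nat -> R -> R) :
  (2 <= N)%nat ->
  0 < lam < 1 ->
  (forall i, (1 <= i <= N)%nat -> bilip_le lam (phi i)) ->
  (forall i x, (1 <= i <= N)%nat -> in01 x -> 0 < phi i x < 1) ->
  forall (mu : nat -> R), in_U N mu ->
  ~ singular_connection N phi mu ->
  forall f : R -> R, is_f_mu N phi mu f ->
  forall x, periodic_point f x -> regular_point N mu f x.
Proof.
  intros HN Hl Hb Hr mu HU Hnc f Hf x [Hx [n [Hn Hper]]] k [i [Hi Hz]].
  pose proof HU as [H0 [H1 _]].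
  set (z := Nat.iter k f x) in *.
  assert (Hzz : Nat.iter n f z = z).
  { unfold z. rewrite <- iter_add_l, Nat.add_comm, iter_add_l. now rewrite Hper. }
  assert (Hzin : in01 z) by (apply iter_in01; auto; apply Hf).
  assert (Hz01 : 0 < z < 1).
  { destruct n. lia. simpl in Hzz. rewrite <- Hzz.
    assert (Hw : in01 (Nat.iter n f z)) by (apply iter_in01; auto; apply Hf).
    destruct (f_is_phi N lam phi mu f HN Hl Hb HU Hf _ Hw) as [j [Hj ->]]. auto. }
  assert (i <> 0%nat) by (intro; subst; lra).
  assert (i <> N) by (intro; subst; lra).
  destruct (iter_word N lam phi mu f HN Hl Hb HU Hf n z Hzin) as [alpha [Hlen [Hin Heq]]].
  apply Hnc. exists alpha, i, i. split; [lia|]. split; [exact Hin|]. split; [lia|]. split; [lia|].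
  rewrite Heq in Hzz. unfold z in *. rewrite <- Hz. exact Hzz.
Qed.
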